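(* Let $M$ be an $N$-person normal form game matrix of dimensions $m_1\times\cdots\times m_N$ with payoffs $a^k_{i_1\dots i_N}$, and fix a profile $(p_1,\dots,p_N)$ with $1\le p_k\le m_k$. Let $S$ be the set of profiles that differ from $(p_1,\dots,p_N)$ in at most one coordinate. Suppose we are given real numbers $x^k_{\sigma}$ for each player $k\in\{1,\dots,N\}$ and each profile $\sigma\in S$, such that $\sum_{k=1}^N x^k_\sigma=\sum_{k=1}^N a^k_\sigma$ for every $\sigma\in S$. Then there is a unique $N$-person normal form game matrix $\widehat M$ of dimensions $m_1\times\cdots\times m_N$ with payoffs $\hat a^k$ such that $\widehat M$ can be obtained from $M$ by an OI-transformation and $\hat a^k_\sigma=x^k_\sigma$ for all $k$ and all $\sigma\in S$.
   Context: An $N$-person normal form game matrix of dimensions $m_1\times\cdots\times m_N$ assigns to each strategy profile $(i_1,\dots,i_N)$ with $1\le i_k\le m_k$ a payoff vector $(a^1_{i_1\dots i_N},\dots,a^N_{i_1\dots i_N})\in\mathbb{R}^N$, where $a^k$ is the payoff of player $k$ and $i_k$ indexes the strategy of player $k$. A preplay offer by player $p$ to player $q\neq p$ of amount $\delta\ge 0$ contingent on strategy $s$ of $q$ transforms a matrix by replacing, at every profile with $i_q=s$, the payoff $a^p$ by $a^p-\delta$ and $a^q$ by $a^q+\delta$, leaving all other payoffs unchanged; this map is a POI-transformation. An OI-transformation is any composition of finitely many POI-transformations. $\widehat M$ ''can be obtained from $M$ by an OI-transformation'' means $\widehat M=\tau(M)$ for some OI-transformation $\tau$. *)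

(* Defs.v *)
(* Real numbers are taken as an arbitrary realFieldType R
   (the statement is purely algebraic/order-theoretic). *)
From HB Require Import structures.
From mathcomp Require Import all_boot all_order all_algebra.
Set Implicit Arguments. Unset Strict Implicit. Unset Printing Implicit Defensive.
Import Order.TTheory GRing.Theory Num.Theory.
Local Open Scope ring_scope.

Section Games.
Variables (R : realFieldType) (N : nat) (m : 'I_N -> nat).

(* A strategy profile (i_1,...,i_N) with i_k in {0,...,m_k - 1}. *)
Definition profile := {dffun forall k : 'I_N, 'I_(m k)}.

Definition game := profile -> 'I_N -> R.

(* Preplay offer by player p to player q of amount d contingent on strategy s of q. *)
Definition poi (p q : 'I_N) (d : R) (s : 'I_(m q)) (M : game) : game :=
  fun sigma k =>
    if sigma q == s then
      (if k == p then M sigma k - d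
       else if k == q then M sigma k + d
       else M sigma k)
    else M sigma k.

Arguments poi : clear implicits.
Arguments poi p q d%_ring_scope s M _ _.
Inductive is_OI : (game -> game) -> Prop :=
| OI_id : is_OI id
| OI_comp (p q : 'I_N) (d : R) (s : 'I_(m q)) (tau : game -> game) :
    p != q -> 0 <= d -> is_OI tau -> is_OI (tau \o poi p q d s).

Definition near (pr sigma : profile) : bool :=
  (#|[pred k : 'I_N | sigma k != pr k]| <= 1)%N.

End Games.

(* Main.v *)
Require Import Defs.
From HB Require Import structures.
From mathcomp Require Import all_boot all_order all_algebra.
From mathcomp Require Import ring.
From Stdlib Require Import FunctionalExtensionality.
Import Order.TTheory GRing.Theory Num.Theory.
Local Open Scope ring_scope.
Unset Implicit Arguments.

Section S.
Variables (R : realFieldType) (N : nat) (m : 'I_N -> nat).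

Definition upd (pr : profile m) (j : 'I_N) (t : 'I_(m j)) : profile m :=
  @finfun _ (fun i => 'I_(m i)) (dfwith (fun i => pr i) t).

Arguments upd : clear implicits.
Lemma upd_in pr j t : upd pr j t j = t.
Proof. by rewrite /upd ffunE dfwith_in. Qed.
Lemma upd_out pr j t i : j != i -> upd pr j t i = pr i.
Proof. by move=> h; rewrite /upd ffunE dfwith_out. Qed.

Lemma sum_if n (a : 'I_n) (F : 'I_n -> R) : \sum_i (if a == i then F i else 0) = F a.
Proof. by rewrite -big_mkcond /= (big_pred1 a) // => i; exact: eq_sym. Qed.

Lemma sum_if_neq n (a s : 'I_n) (c : R) :
  \sum_(i | i != s) (if a == i then c else 0) = (if a == s then 0 else c).
Proof.
have := sum_if n a (fun _ => c); rewrite (bigD1 s) //=.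
case: eqP => [->|ne]; last by rewrite add0r.
by move=> h; apply: (addrI c); rewrite h addr0.
Qed.

Definition realizable (D : profile m -> 'I_N -> R) :=
  exists tau : game R m -> game R m, is_OI tau /\
    forall M sigma k, tau M sigma k = M sigma k + D sigma k.

Lemma is_OI_comp t1 t2 : is_OI t1 -> is_OI t2 -> @is_OI R N m (t1 \o t2).
Proof.
move=> h1; elim=> [|p q d s tau hpq hd _ IH] //.
exact: (OI_comp s hpq hd IH).
Qed.

Lemma real_add D1 D2 : realizable D1 -> realizable D2 ->
  realizable (fun s k => D1 s k + D2 s k).
Proof.
move=> [t1 [h1 e1]] [t2 [h2 e2]]; exists (t1 \o t2); split; first exact: is_OI_comp.
by move=> M s k /=; rewrite e1 e2 -addrA (addrC (D2 s k)).
Qed.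

Lemma real_ext D1 D2 : realizable D1 -> (forall s k, D1 s k = D2 s k) -> realizable D2.
Proof. by move=> [t [h e]] E; exists t; split=> // M s k; rewrite e E. Qed.

Lemma real_sum (I : Type) (r : seq I) (P : pred I) (F : I -> profile m -> 'I_N -> R) :
  (forall i, P i -> realizable (F i)) ->
  realizable (fun s k => \sum_(i <- r | P i) F i s k).
Proof.
move=> h; elim: r => [|i r IH].
  exists id; split; first exact: OI_id.
  by move=> M s k; rewrite big_nil addr0.
case Pi: (P i).
  apply: (real_ext _ _ (real_add _ _ (h i Pi) IH)) => s k; by rewrite big_cons Pi.
by apply: (real_ext _ _ IH) => s k; rewrite big_cons Pi.
Qed.

Arguments realizable : clear implicits.
Definition E (p q : 'I_N) (s : 'I_(m q)) (d : R) : profile m -> 'I_N -> R :=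
  fun sigma k => if sigma q == s then d * ((k == q)%:R - (k == p)%:R) else 0.

Lemma real_E_pos p q s d : p != q -> 0 <= d -> realizable (E p q s d).
Proof.
move=> hpq hd; exists (id \o poi p (q:=q) d s); split; first by apply: OI_comp => //; apply: OI_id.
move=> M sigma k; rewrite /= /poi /E; case: (sigma q == s); last by rewrite addr0.
case: (k =P p) => [->|hkp].
  by rewrite (negbTE hpq) /= sub0r mulrN1.
case: (k =P q) => [->|hkq]; first by rewrite /= subr0 mulr1.
by rewrite /= subrr mulr0 addr0.
Qed.

Lemma real_E p q s d : p != q -> realizable (E p q s d).
Proof.
move=> hpq; have [hd|hd] := lerP 0 d; first exact: real_E_pos.
have hq : q != p by rewrite eq_sym.
have hd' : 0 <= - d by rewrite oppr_ge0 ltW.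
have h1 := real_sum _ (index_enum 'I_(m q)) (fun s' => s' != s) (fun s' => E p q s' (- d))
  (fun s' _ => real_E_pos p q s' (- d) hpq hd').
have h2 := real_sum _ (index_enum 'I_(m p)) xpredT (fun r => E q p r (- d))
  (fun r _ => real_E_pos q p r (- d) hq hd').
apply: (real_ext _ _ (real_add _ _ h1 h2)) => sigma k.
rewrite /E sum_if_neq sum_if.
by case: ifP => _; ring.
Qed.

Lemma real_T p q (c : 'I_(m q) -> R) : p != q ->
  realizable (fun sigma k => c (sigma q) * ((k == q)%:R - (k == p)%:R)).
Proof.
move=> hpq.
apply: (real_ext _ _ (real_sum _ (index_enum _) xpredT (fun s => E p q s (c s))
   (fun s _ => real_E p q s (c s) hpq))) => sigma k.
by rewrite /E (sum_if _ (sigma q) (fun i => c i * ((k == q)%:R - (k == p)%:R))).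
Qed.

Lemma real_u (u : forall j : 'I_N, 'I_(m j) -> 'I_N -> R) :
  (forall j t, \sum_k u j t k = 0) ->
  realizable (fun sigma k => \sum_j u j (sigma j) k).
Proof.
move=> Z.
have h j : realizable (fun sigma k => \sum_(k' <- index_enum 'I_N | k' != j)
      (- u j (sigma j) k') * ((k == j)%:R - (k == k')%:R)).
  apply: real_sum => k' hk'.
  exact: (real_T k' j (fun t => - u j t k') hk').
apply: (real_ext _ _ (real_sum _ (index_enum _) xpredT _ (fun j _ => h j))) => sigma k.
apply: eq_bigr => j _.
set t := sigma j.
have Zj := Z j t; rewrite (bigD1 j) //= in Zj.
case: (eqVneq k j) => [->|hkj].
  rewrite (eq_bigr (fun k' => - u j t k')); last first.
    by move=> k' hk'; rewrite eq_sym (negbTE hk') /=; ring.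
  rewrite sumrN; apply/eqP; rewrite eq_sym -subr_eq0 opprK Zj //.
rewrite (bigD1 k) /=; last by [].
rewrite big1; first by rewrite eqxx /=; ring.
move=> k' /andP[_ hk'k]; rewrite eq_sym (negbTE hk'k) /=; ring.
Qed.

Lemma OI_form tau : is_OI tau -> exists u : forall j : 'I_N, 'I_(m j) -> 'I_N -> R,
  forall M sigma k, tau M sigma k = M sigma k + \sum_j u j (sigma j) k.
Proof.
elim=> [|p q d s tau0 hpq hd _ [u e]].
  by exists (fun _ _ _ => 0) => M sigma k; rewrite big1 ?addr0.
exists (fun j t k => u j t k + (if (j == q) && (val t == val s)
           then d * ((k == q)%:R - (k == p)%:R) else 0)).
move=> M sigma k; rewrite /= e big_split /=.
suff -> : poi p d s M sigma k = M sigma k + \sum_j (if (j == q) && (val (sigma j) == val s)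
           then d * ((k == q)%:R - (k == p)%:R) else 0) by ring.
rewrite (bigD1 q) //= big1; last by move=> j /negbTE ->.
rewrite eqxx /= val_eqE addr0 /poi.
case: (sigma q == s); last by rewrite addr0.
case: (k =P p) => [->|hkp].
  by rewrite (negbTE hpq) /= sub0r mulrN1.
case: (k =P q) => [->|hkq]; first by rewrite /= subr0 mulr1.
by rewrite /= subrr mulr0 addr0.
Qed.

Lemma upd_sum (u : forall j : 'I_N, 'I_(m j) -> 'I_N -> R) (pr : profile m) j t k :
  \sum_i u i (upd pr j t i) k = \sum_i u i (pr i) k + (u j t k - u j (pr j) k).
Proof.
rewrite (bigD1 j) //= [in RHS](bigD1 j) //= upd_in.
rewrite (eq_bigr (fun i => u i (pr i) k)); last first.
  by move=> i hi; rewrite upd_out // eq_sym.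
ring.
Qed.

Lemma interp (u : forall j : 'I_N, 'I_(m j) -> 'I_N -> R) (pr sigma : profile m) k :
  \sum_j u j (sigma j) k = \sum_j u j (pr j) k +
    \sum_j (\sum_i u i (upd pr j (sigma j) i) k - \sum_i u i (pr i) k).
Proof.
rewrite [X in _ = _ + X](eq_bigr (fun j => u j (sigma j) k - u j (pr j) k)); last first.
  by move=> j _; rewrite upd_sum; ring.
rewrite sumrB; ring.
Qed.

Lemma near_upd (pr : profile m) j t : near pr (upd pr j t).
Proof.
rewrite /near; apply: leq_trans (subset_leq_card (_ : _ \subset pred1 j)) _.
  apply/subsetP => i; rewrite !inE; apply: contraR => hij.
  by rewrite upd_out ?eqxx // eq_sym.
by rewrite card1.
Qed.

Lemma near_refl (pr : profile m) : near pr pr.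
Proof. by rewrite /near eq_card0 // => i; rewrite !inE eqxx. Qed.

Lemma upd_self (pr : profile m) j : upd pr j (pr j) = pr.
Proof.
apply/ffunP => i; case: (eqVneq j i) => [<-|ne]; first by rewrite upd_in.
by rewrite upd_out.
Qed.

Lemma near_eq (pr sigma : profile m) j i : near pr sigma -> sigma j != pr j -> i != j ->
  sigma i = pr i.
Proof.
move=> /card_le1P hn hj hij.
have := hn j; rewrite inE => /(_ hj) /(_ i); rewrite !inE (negbTE hij).
by move/negbFE/eqP.
Qed.

Lemma upd_near (pr sigma : profile m) j : near pr sigma -> sigma j != pr j ->
  upd pr j (sigma j) = sigma.
Proof.
move=> hn hj; apply/ffunP => i; case: (eqVneq j i) => [<-|ne]; first by rewrite upd_in.
by rewrite upd_out // (near_eq pr sigma j i hn hj) // eq_sym.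
Qed.

Lemma uniq_lemma (M : game R m) (pr : profile m) (x : profile m -> 'I_N -> R) t1 t2 :
  is_OI t1 -> is_OI t2 ->
  (forall sigma, near pr sigma -> forall k, t1 M sigma k = x sigma k) ->
  (forall sigma, near pr sigma -> forall k, t2 M sigma k = x sigma k) ->
  t1 M = t2 M.
Proof.
move=> h1 h2 e1 e2.
have key : forall t, is_OI t ->
   (forall sigma, near pr sigma -> forall k, t M sigma k = x sigma k) ->
   forall sigma k, t M sigma k = M sigma k + ((x pr k - M pr k) +
     \sum_j ((x (upd pr j (sigma j)) k - M (upd pr j (sigma j)) k) - (x pr k - M pr k))).
  move=> t ht et sigma k; have [u eu] := OI_form t ht.
  have hu : forall nu, near pr nu -> \sum_i u i (nu i) k = x nu k - M nu k.
    by move=> nu hnu; rewrite -(et nu hnu k) eu; ring.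
  rewrite eu (interp u pr sigma k) (hu pr (near_refl pr)).
  congr (_ + (_ + _)); apply: eq_bigr => j _; by rewrite hu ?near_upd.
apply: functional_extensionality => sigma; apply: functional_extensionality => k.
by rewrite (key t1) // (key t2).
Qed.

Lemma main_sec (M : game R m) (pr : profile m) (x : profile m -> 'I_N -> R) :
  (forall sigma : profile m, near pr sigma ->
     \sum_(k < N) x sigma k = \sum_(k < N) M sigma k) ->
  exists! Mh : game R m,
    (exists tau : game R m -> game R m, @is_OI R N m tau /\ Mh = tau M) /\
    (forall sigma : profile m, near pr sigma -> forall k : 'I_N, Mh sigma k = x sigma k).
Proof.
move=> Hx.
suff [tau [ht et]] : exists tau : game R m -> game R m, is_OI tau /\
    forall sigma, near pr sigma -> forall k, tau M sigma k = x sigma k.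
  exists (tau M); split; first by split=> //; exists tau.
  move=> Mh [[tau' [ht' ->]] e'].
  by apply: uniq_lemma; [exact: ht|exact: ht'|exact: et|exact: e'].
case: (pickP (fun _ : 'I_N => true)) => [j0 _|hN]; last first.
  exists id; split; first exact: OI_id.
  by move=> sigma _ k; have := hN k.
pose y sigma k := x sigma k - M sigma k.
have ys nu : near pr nu -> \sum_k y nu k = 0 by move=> h; rewrite sumrB Hx // subrr.
pose u j (t : 'I_(m j)) k := (y (upd pr j t) k - y pr k) + (if j == j0 then y pr k else 0).
have zs : forall j t, \sum_k u j t k = 0.
  move=> j t; rewrite big_split sumrB /= ys ?near_upd // ys ?near_refl // subrr add0r.
  by case: (j == j0); [rewrite ys ?near_refl | rewrite big1].
have [tau [ht et]] := real_u u zs.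
exists tau; split => // sigma hs k; rewrite et.
suff -> : \sum_j u j (sigma j) k = y sigma k by rewrite /y; ring.
rewrite big_split /= -big_mkcond big_pred1_eq.
case: (pickP (fun j => sigma j != pr j)) => [j1 hj1|hno].
  rewrite (bigD1 j1) //= upd_near // big1 /y; first ring.
  move=> j hj; rewrite (near_eq pr sigma j1 j hs hj1 hj) upd_self; ring.
have -> : sigma = pr by apply/ffunP => i; have := hno i; move/negbFE/eqP.
by rewrite big1 ?add0r // => j _; rewrite upd_self subrr.
Qed.

End S.

Theorem theorem4 (R : realFieldType) (N : nat) (m : 'I_N -> nat)
  (M : game R m) (pr : profile m) (x : profile m -> 'I_N -> R) :
  (forall sigma : profile m, near pr sigma ->
     \sum_(k < N) x sigma k = \sum_(k < N) M sigma k) ->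
  exists! Mh : game R m,
    (exists tau : game R m -> game R m, @is_OI R N m tau /\ Mh = tau M) /\
    (forall sigma : profile m, near pr sigma -> forall k : 'I_N, Mh sigma k = x sigma k).
Proof. exact: main_sec. Qed.
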